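(* Let $n\ge 1$, $0\le r\le s\le n$ and $0\le k\le n-1$ be integers, with $k\ge 1$ if $r=s$. Then $$M_{r,s}^{n,k}=2\sum_t\sum_j(-1)^j\frac{s-j-r+1+2t}{n-1-j-2t}\binom{k}{2t+1}\binom{k-1-2t}{j}\binom{n-1-j-2t}{s-j}\binom{n-1-j-2t}{r-1-2t}+\frac{s-r}{n-k}\sum_j\binom{k}{j}\binom{n-k}{r-j}\binom{n-k}{s-j},$$ where all sums are over nonnegative integers $t,j$ (only finitely many terms are nonzero). In particular $M_{r,s}^{n,0}=\frac{s-r}{n}\binom{n}{r}\binom{n}{s}$ for $r<s$.
   Context: For $n\ge1$ and $0\le r\le n$, a lattice path from $(0,0)$ to $(r,n-r)$ is a sequence of lattice points $v_0=(0,0),\dots,v_n=(r,n-r)$ with each step $v_i-v_{i-1}\in\{(1,0),(0,1)\}$; its vertex set is $\{v_0,\dots,v_n\}$. $N_k^{n,r}$ denotes the number of ordered pairs of lattice paths from $(0,0)$ to $(r,n-r)$ whose vertex sets share exactly $k$ points other than $(0,0)$ and $(r,n-r)$. For $0\le r<s\le n$, $M_{r,s}^{n,k}$ is the number of pairs $(P,Q)$ with $P$ a lattice path from $(0,0)$ to $(r,n-r)$ and $Q$ a lattice path from $(0,0)$ to $(s,n-s)$ whose vertex sets share exactly $k$ points other than $(0,0)$. For $r=s$ and $k\ge1$, $M_{r,r}^{n,k}:=N_{k-1}^{n,r}$. Binomial coefficients $\binom{a}{b}$ with $a\ge 0$ are $0$ if $b<0$ or $b>a$. *)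

(* Defs.v *)
From mathcomp Require Import all_boot all_order all_algebra.
Set Implicit Arguments. Unset Strict Implicit. Unset Printing Implicit Defensive.
Import Order.TTheory GRing.Theory Num.Theory.

(* A lattice path with n unit steps is encoded by its step sequence:
   true = step (1,0), false = step (0,1). It ends at (r, n-r) iff it has
   exactly r true steps. *)
Definition lpath (n : nat) := (n.-tuple bool)%type.

Definition vtx n (P : lpath n) (i : nat) : nat * nat :=
  (count id (take i P), i - count id (take i P)).

Definition verts n (P : lpath n) : seq (nat * nat) :=
  [seq vtx P i | i <- iota 0 n.+1].

Definition ends_at n (P : lpath n) (r : nat) : bool := count id P == r.

Definition shared n (P Q : lpath n) (excl : seq (nat * nat)) : nat :=
  size [seq p <- undup (verts P) | (p \in verts Q) && (p \notin excl)].

Definition Ncount (n r k : nat) : nat :=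
  #|[set PQ : lpath n * lpath n |
      [&& ends_at PQ.1 r, ends_at PQ.2 r &
          shared PQ.1 PQ.2 [:: (0, 0); (r, n - r)] == k]]|.

Definition Mcount (n r s k : nat) : nat :=
  if r < s then
    #|[set PQ : lpath n * lpath n |
        [&& ends_at PQ.1 r, ends_at PQ.2 s &
            shared PQ.1 PQ.2 [:: (0, 0)] == k]]|
  else Ncount n r k.-1.

Definition binz (a b : int) : rat :=
  if (0 <= a)%R && (0 <= b)%R then (('C(absz a, absz b))%:R)%R else 0%R.

(* Main.v *)
Require Import Defs.
From mathcomp Require Import all_boot all_order all_algebra.
From mathcomp Require Import mpoly ring zify.
Import Order.TTheory GRing.Theory Num.Theory.
Set Implicit Arguments. Unset Strict Implicit. Unset Printing Implicit Defensive.

Module Part1.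
Local Open Scope ring_scope.

Definition i0 : 'I_3 := @Ordinal 3 0 isT.
Definition i1 : 'I_3 := @Ordinal 3 1 isT.
Definition i2 : 'I_3 := @Ordinal 3 2 isT.

Definition fn := int -> int -> int -> rat.
Definition MP := {mpoly rat[3]}.

Definition shiftv (v : fn) (m : 'X_{1..3}) a b c :=
  v (a - (m i0)%:Z) (b - (m i1)%:Z) (c - (m i2)%:Z).

Definition act (p : MP) (v : fn) : fn :=
  fun a b c => \sum_(m <- msupp p) p@_m * shiftv v m a b c.

Lemma act_sup p (S : seq 'X_{1..3}) v a b c : uniq S -> {subset msupp p <= S} ->
  act p v a b c = \sum_(m <- S) p@_m * shiftv v m a b c.
Proof.
move=> uS sub; rewrite /act.
rewrite [RHS](bigID (fun m => m \in msupp p)) /=.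
rewrite [X in _ = _ + X]big1 ?addr0; last first.
  by move=> m /memN_msupp_eq0 ->; rewrite mul0r.
rewrite -[RHS]big_filter; apply: perm_big.
apply: uniq_perm; rewrite ?msupp_uniq ?filter_uniq //.
by move=> m; rewrite mem_filter; case: (boolP (m \in msupp p)) => // /sub ->.
Qed.

Lemma actD p q v a b c : act (p + q) v a b c = act p v a b c + act q v a b c.
Proof.
set S := undup (msupp p ++ msupp q).
have uS : uniq S by rewrite undup_uniq.
rewrite (@act_sup (p+q) S) //; last first.
  by move=> m /msuppD_le; rewrite mem_undup.
rewrite (@act_sup p S) // ?(@act_sup q S) //; last 2 first.
- by move=> m mq; rewrite mem_undup mem_cat mq orbT.
- by move=> m mp; rewrite mem_undup mem_cat mp.
by rewrite -big_split /=; apply: eq_bigr => m _; rewrite mcoeffD mulrDl.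
Qed.

Lemma actZ c p v a b d : act (c *: p) v a b d = c * act p v a b d.
Proof.
rewrite (@act_sup (c *: p) (msupp p)) ?msupp_uniq //; last exact: msuppZ_le.
rewrite /act mulr_sumr; apply: eq_bigr => m _; by rewrite mcoeffZ mulrA.
Qed.

Lemma act0 v a b c : act 0 v a b c = 0.
Proof. by rewrite /act msupp0 big_nil. Qed.

Lemma actX m v a b c : act 'X_[m] v a b c = shiftv v m a b c.
Proof. by rewrite /act msuppX big_seq1 mcoeffX eqxx mul1r. Qed.

Lemma act_ext p v1 v2 : (forall a b c, v1 a b c = v2 a b c) ->
  forall a b c, act p v1 a b c = act p v2 a b c.
Proof. by move=> e a b c; apply: eq_bigr => m _; rewrite /shiftv e. Qed.

Lemma actXM m q v a b c : act ('X_[m] * q) v a b c = act 'X_[m] (act q v) a b c.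
Proof.
elim/mpolyind: q a b c => [|d m' q _ _ IH] a b c.
  by rewrite mulr0 act0 actX /shiftv act0.
rewrite mulrDr actD IH -scalerAr actZ -mpolyXD actX actX.
rewrite actX [in RHS]/shiftv actD actZ actX; congr (_ * _ + _).
rewrite /shiftv !mnmDE !PoszD !opprD !addrA.
by congr v; rewrite addrAC.
Qed.

Lemma actM p q v a b c : act (p * q) v a b c = act p (act q v) a b c.
Proof.
elim/mpolyind: p a b c => [|d m p _ _ IH] a b c.
  by rewrite mul0r !act0.
by rewrite mulrDl actD IH -scalerAl actZ actXM actD actZ.
Qed.

Lemma act1 v a b c : act 1 v a b c = v a b c.
Proof.
by rewrite -mpolyX0 actX /shiftv !mnm0E !subr0.
Qed.

Lemma actB p q v a b c : act (p - q) v a b c = act p v a b c - act q v a b c.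
Proof. by rewrite actD -scaleN1r actZ mulN1r. Qed.

Lemma act_sum I (r : seq I) (P : pred I) (F : I -> MP) v a b c :
  act (\sum_(i <- r | P i) F i) v a b c = \sum_(i <- r | P i) act (F i) v a b c.
Proof.
elim: r => [|i r IH]; first by rewrite !big_nil act0.
by rewrite !big_cons; case: (P i); rewrite ?actD IH.
Qed.

Lemma actXi (i : 'I_3) v a b c : act 'X_i v a b c =
  v (a - (i == i0)%:R) (b - (i == i1)%:R) (c - (i == i2)%:R).
Proof.
rewrite actX /shiftv !mnm1E.
by case: (i == i0); case: (i == i1); case: (i == i2).
Qed.

Definition gb (N a : int) : rat :=
  if (a < 0)%R then 0 else
  if (0 <= N)%R then ('C(absz N, absz a))%:R
  else (-1) ^+ absz a * ('C(absz a + absz N - 1, absz a))%:R.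

Lemma gbP N a : gb N a = gb (N - 1) a + gb (N - 1) (a - 1).
Proof.
rewrite /gb.
case: a => [[|A]|A].
- rewrite /=. by rewrite !bin0 !expr0 !mul1r; case: ifP; case: ifP; rewrite addr0.
- have -> : (Posz A.+1 - 1)%R = A by rewrite -addn1 PoszD addrK.
  case: N => [[|M]|M].
  + have -> : (Posz 0 - 1)%R = Negz 0 by [].
    by rewrite /= bin0n !addnK !binn !mulr1 exprS mulN1r addNr.
  + have -> : (Posz M.+1 - 1)%R = M by rewrite -addn1 PoszD addrK.
    by rewrite /= binS natrD.
  + have -> : (Negz M - 1)%R = Negz M.+1.
      by rewrite !NegzE -opprD -PoszD addn1.
    rewrite /= !subn1 !addSn !addnS /= (binS (A+M).+1 A) natrD exprS; ring.
- by rewrite /= addr0.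
Qed.

Definition ub (n r s : int) : rat :=
  gb (n - 1) r * gb (n - 1) (s - 1) - gb (n - 1) (r - 1) * gb (n - 1) s.

Lemma ubP n r s : ub n r s = ub (n - 1) r s + ub (n - 1) (r - 1) s
  + ub (n - 1) r (s - 1) + ub (n - 1) (r - 1) (s - 1).
Proof.
rewrite /ub (gbP (n - 1) r) (gbP (n - 1) (s - 1)) (gbP (n - 1) (r - 1)) (gbP (n - 1) s).
ring.
Qed.

Definition Zv : MP := 'X_i0.
Definition Xv : MP := 'X_i1.
Definition Yv : MP := 'X_i2.

Lemma actZv v a b c : act Zv v a b c = v (a - 1) b c.
Proof. by rewrite /Zv actXi /= !subr0. Qed.
Lemma actXv v a b c : act Xv v a b c = v a (b - 1) c.
Proof. by rewrite /Xv actXi /= !subr0. Qed.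
Lemma actYv v a b c : act Yv v a b c = v a b (c - 1).
Proof. by rewrite /Yv actXi /= !subr0. Qed.

Definition wp : MP := Zv * (1 + Xv) * (1 + Yv).

Lemma act_wp v a b c : act wp v a b c = v (a - 1) b c + v (a - 1) (b - 1) c
  + v (a - 1) b (c - 1) + v (a - 1) (b - 1) (c - 1).
Proof.
have -> : wp = Zv + Zv * Xv + Zv * Yv + Zv * (Xv * Yv) by rewrite /wp; ring.
by rewrite !actD !actM !actZv !actXv !actYv actM actXv actYv.
Qed.

Lemma act_fun0 p a b c : act p (fun _ _ _ => 0) a b c = 0.
Proof. by apply: big1 => m _; rewrite /shiftv mulr0. Qed.

Lemma act_kill q a b c : act (q * (1 - wp)) ub a b c = 0.
Proof.
rewrite actM (@act_ext _ _ (fun _ _ _ => 0)) ?act_fun0 //.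
move=> x y z; rewrite actB act1 act_wp (ubP x y z); ring.
Qed.

Definition Ap : MP := 1 + Zv * Xv - Zv * Yv.
Definition Bp : MP := 1 - Zv * Xv - Zv * Yv.
Definition Cp : MP := Zv * (1 + Xv * Yv).
Definition Tp : MP := Zv * (1 + 2%:R * Xv + Xv * Yv).

Lemma key k a b c :
  act (Ap ^+ k - Bp ^+ k + Cp ^+ k) ub a b c = act (Tp ^+ k) ub a b c.
Proof.
have -> : Ap ^+ k - Bp ^+ k + Cp ^+ k = Tp ^+ k + ((Ap ^+ k - Tp ^+ k) - (Bp ^+ k - Cp ^+ k)).
  ring.
rewrite !subrXX.
have -> : Ap - Tp = 1 - wp by rewrite /Ap /Tp /wp; ring.
have -> : Bp - Cp = 1 - wp by rewrite /Bp /Cp /wp; ring.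
rewrite -mulrBr mulrC actD act_kill addr0 //.
Qed.

Fixpoint F (n r s k : nat) : nat :=
  match n with
  | 0 => ((r == 0) && (s == 0) && (k == 0))%N
  | n'.+1 => if (r == s) && (k == 0)%N then 0 else
     let k' := if r == s then k.-1 else k in
     (F n' r s k' + (if r is r'.+1 then F n' r' s k' else 0)
     + (if s is s'.+1 then F n' r s' k' else 0)
     + (match r, s with r'.+1, s'.+1 => F n' r' s' k' | _, _ => 0 end))%N
  end.

Lemma subzS (n : nat) : (Posz n.+1 - 1)%R = n.
Proof. by rewrite -addn1 PoszD addrK. Qed.

Lemma gb_neg N a : (a < 0)%R -> gb N a = 0.
Proof. by rewrite /gb => ->. Qed.

Lemma ub_negr n r s : (r < 0)%R -> ub n r s = 0.
Proof.
move=> h; rewrite /ub [gb _ r]gb_neg // [gb _ (r - 1)]gb_neg ?mul0r ?subr0 //; lia.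
Qed.

Lemma ub_negs n r s : (s < 0)%R -> ub n r s = 0.
Proof.
move=> h; rewrite /ub [gb _ s]gb_neg // [gb _ (s - 1)]gb_neg ?mulr0 ?subr0 //; lia.
Qed.

Lemma act_ub_neg p n r s : ((r < 0) || (s < 0))%R -> act p ub n r s = 0.
Proof.
move=> h; apply: big1 => m _; rewrite /shiftv.
case/orP: h => h.
  by rewrite ub_negr ?mulr0 //; lia.
by rewrite ub_negs ?mulr0 //; lia.
Qed.

Lemma act_rec p n r s : act p ub n r s = act p ub (n - 1) r s + act p ub (n - 1) (r - 1) s
  + act p ub (n - 1) r (s - 1) + act p ub (n - 1) (r - 1) (s - 1).
Proof.
rewrite -act_wp -actM mulrC actM; apply: act_ext => a b c.
by rewrite act_wp -ubP.
Qed.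

Lemma act_Tp v a b c : act Tp v a b c = v (a - 1) b c + 2%:R * v (a - 1) (b - 1) c
  + v (a - 1) (b - 1) (c - 1).
Proof.
have -> : Tp = Zv + 2%:R *: (Zv * Xv) + Zv * (Xv * Yv).
  by rewrite /Tp -mul_mpolyC; ring.
by rewrite !actD actZ !actM !actZv actXv actM actXv actYv.
Qed.

Lemma act_TpS k n r s : act (Tp ^+ k.+1) ub n r s = act (Tp ^+ k) ub (n - 1) r s
  + 2%:R * act (Tp ^+ k) ub (n - 1) (r - 1) s + act (Tp ^+ k) ub (n - 1) (r - 1) (s - 1).
Proof. by rewrite exprS actM act_Tp. Qed.

Lemma ub_diag n r : ub n r r = 0.
Proof. by rewrite /ub mulrC subrr. Qed.

Lemma F_sym n r s k : F n r s k = F n s r k.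
Proof.
elim: n r s k => [|n IH] r s k /=; first by rewrite [(r == 0%N) && _]andbC.
rewrite [s == r]eq_sym; case: ifP => // _.
move: (if _ then _ else _) => k'.
case: r => [|r]; case: s => [|s] /=.
- by [].
- by rewrite (IH 0%N s.+1) (IH 0%N s); lia.
- by rewrite (IH r.+1 0%N) (IH r 0%N); lia.
- by rewrite (IH r.+1 s.+1) (IH r s.+1) (IH r.+1 s) (IH r s); lia.
Qed.

Lemma F_big n r s k : (n < k)%N -> F n r s k = 0%N.
Proof.
elim: n r s k => [|n IH] r s k hk /=; first by rewrite (gtn_eqF hk) andbF.
case: ifP => // _.
have : (n < (if r == s then k.-1 else k))%N by case: (r == s); lia.
move: (if _ then _ else _) => k' hk'.
by case: r => [|r]; case: s => [|s]; rewrite ?IH.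
Qed.

Lemma F_top n r s : F n r s n = (if r == s then 'C(n, r) else 0)%N.
Proof.
elim: n r s => [|n IH] r s /=.
  by case: r => [|r]; case: s => [|s] //=; case: ifP.
case: (eqVneq r s) => [<-|ne] /=.
  case: r => [|r].
    by rewrite IH eqxx !bin0 !addn0.
  by rewrite !IH eqxx (gtn_eqF (ltnSn r)) (ltn_eqF (ltnSn r)) eqxx binS; lia.

by case: r ne => [|r]; case: s => [|s] ne; rewrite ?F_big.
Qed.

Lemma gb_nat (N a : nat) : gb N a = ('C(N, a))%:R.
Proof. by rewrite /gb. Qed.

Lemma h5 m (r s : nat) : (r < s)%N ->
  act (Tp ^+ m) ub m.+1 r s = ((if s == r.+1 then 'C(m, r) else 0)%N)%:R.
Proof.
elim: m r s => [|m IH] r s hrs.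
  rewrite act1 /ub subrr.
  case: s hrs => [|s] // hrs; rewrite subzS.
  case: r hrs => [|r] hrs.
    rewrite [gb 0 (0 - 1)]gb_neg // mul0r subr0 !gb_nat.
    by case: s {hrs} => [|s].
  rewrite subzS !gb_nat /= bin0n mulr0 subr0.
  by case: s hrs => [|s] //= hrs; rewrite mul0r; case: ifP.
rewrite act_TpS subzS IH //.
case: r hrs => [|r] hrs.
  rewrite !act_ub_neg ?mulr0 ?addr0 //= ?bin0 //.
case: s hrs => [|s] // hrs.
rewrite !subzS IH 1?ltnW // IH //.
rewrite (gtn_eqF hrs) mulr0 addr0 eqSS.
by case: ifP => _; rewrite ?addr0 // -natrD binS.
Qed.

Lemma F_diag0 n r : (0 < n)%N -> F n r r 0 = 0%N.
Proof. by case: n => //= n _; rewrite eqxx. Qed.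

Lemma Fh n r s k : (1 <= n)%N -> (r <= s)%N -> (k <= n.-1)%N -> (r = s -> 1 <= k)%N ->
  (F n r s k)%:R = act (Tp ^+ k) ub n r s.
Proof.
elim: n r s k => [|n IH] r s k // _ hrs hk hd.
rewrite /= in hk.
have diag0 : forall a, (1 <= n)%N -> (F n a a 0)%:R = act (Tp ^+ 0) ub n a a.
  by move=> a hn; rewrite F_diag0 // act1 ub_diag.
case: (ltngtP r s) hrs => // [hlt | heq] _.
- rewrite /= (ltn_eqF hlt) /=.
  case: (ltngtP k n) hk => // [hkn|hkn] _.
  + rewrite act_rec subzS !natrD.
    congr (_ + _ + _ + _).
    * by apply: IH => //; lia.
    * case: r hlt {hd} => [|r] hlt; first by rewrite act_ub_neg.
      by rewrite subzS; apply: IH => //; lia.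
    * case: s hlt {hd} => [|s] hlt //; rewrite subzS.
      case: (eqVneq r s) => [<-|ne].
        case: k hkn => [|k] hkn; first by apply: diag0; lia.
        by apply: IH => //; lia.
      by apply: IH => //; lia.
    * case: r hlt {hd} => [|r] hlt; first by rewrite act_ub_neg.
      case: s hlt => [|s] hlt //; rewrite !subzS.
      by apply: IH => //; lia.
  + subst k; rewrite h5 //.
    case: r hlt {hd} => [|r]; case: s => [|s] // hlt /=; rewrite !F_top.
      by case: s {hlt} => [|s] /=; rewrite ?add0n ?addn0.
    have h1 : (r < s)%N := hlt.
    rewrite (ltn_eqF hlt) (ltn_eqF (ltnW hlt)) (ltn_eqF h1) eqSS [s == _]eq_sym.
    by case: (r.+1 == s); rewrite ?addn0.
- subst s.
  case: k hk hd => [|k] hk hd; first by have := hd erefl.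
  clear hd; have hn : (1 <= n)%N by lia.
  have hdiag : forall a, (F n a a k)%:R = act (Tp ^+ k) ub n a a.
    move=> a; case: k hk => [|k] hk; first exact: diag0.
    by apply: IH => //; lia.
  rewrite /= eqxx /= act_TpS subzS.
  case: r => [|r].
    by rewrite !addn0 !(@act_ub_neg _ _ (0 - 1)) // mulr0 !addr0 hdiag.
  rewrite subzS (F_sym n r.+1 r) !natrD !hdiag.
  rewrite (IH r r.+1 k) //; first ring. all: lia.
Qed.

End Part1.
Import Part1.

Module Part2.

Definition stat (P Q : seq bool) : nat :=
  count (fun i => count id (take i P) == count id (take i Q)) (iota 1 (size P)).

Lemma termP c1 c2 st (a b : bool) r s k :
 ((c1 + a == r) && (c2 + b == s) && (st + (c1 + a == c2 + b) == k)) =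
 if (r < a) || (s < b) then false else if r == s then
   (k != 0) && (c1 == r - a) && (c2 == s - b) && (st == k.-1)
 else (c1 == r - a) && (c2 == s - b) && (st == k).
Proof.
case: ifP => h1.
  apply/negbTE; apply/negP => /andP [/andP [/eqP e1 /eqP e2] _].
  by case: a b h1 e1 e2 => [] []; lia.
have ha : (a <= r)%N by case: a h1; lia.
have hb : (b <= s)%N by case: b h1; lia.
case: ifP => /eqP h2.
  apply/idP/idP.
    move=> /andP [/andP [/eqP e1 /eqP e2] /eqP e3].
    have e4 : (c1 + a == c2 + b) by apply/eqP; lia.
    rewrite e4 in e3.
    by repeat (apply/andP; split); try apply/eqP; lia.
  move=> /andP [/andP [/andP [k0 /eqP e1] /eqP e2] /eqP e3].
  have e4 : (c1 + a == c2 + b) by apply/eqP; lia.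
  rewrite e4; by repeat (apply/andP; split); try apply/eqP; lia.
apply/idP/idP.
  move=> /andP [/andP [/eqP e1 /eqP e2] /eqP e3].
  have e4 : (c1 + a == c2 + b) = false by apply/negbTE/eqP; lia.
  rewrite e4 in e3.
  by repeat (apply/andP; split); try apply/eqP; lia.
move=> /andP [/andP [/eqP e1 /eqP e2] /eqP e3].
have e4 : (c1 + a == c2 + b) = false by apply/negbTE/eqP; lia.
rewrite e4; by repeat (apply/andP; split); try apply/eqP; lia.
Qed.

Lemma count_rcons_id (P : seq bool) a : count id (rcons P a) = count id P + a.
Proof. by rewrite -cats1 count_cat /= addn0. Qed.

Lemma stat_rcons P Q a b : size P = size Q ->
  stat (rcons P a) (rcons Q b) = stat P Q + (count id P + a == count id Q + b).
Proof.
move=> e; rewrite /stat size_rcons -[(size P).+1]addn1 iotaD count_cat /= addn0.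
congr (_ + _).
  apply: eq_in_count => i; rewrite mem_iota => /andP [_ hi].
  rewrite -!cats1 !takel_cat //; lia.
by rewrite !take_oversize ?size_rcons -?e ?add1n // !count_rcons_id.

Qed.

Definition rc n (p : n.-tuple bool * bool) : n.+1.-tuple bool := [tuple of rcons p.1 p.2].
Definition unrc n (t : n.+1.-tuple bool) : n.-tuple bool * bool :=
  ([tuple of belast (thead t) (behead t)], last (thead t) (behead t)).

Lemma rcK n : cancel (@rc n) (@unrc n).
Proof.
move=> [t b]; rewrite /unrc.
set u := rc (t, b).
have e : rcons (belast (thead u) (behead u)) (last (thead u) (behead u)) = rcons t b.
  by rewrite -lastI -[RHS]/(val u) [in RHS](tuple_eta u).
case/rcons_inj: e => e1 e2.
by congr (_, _); [apply: val_inj|].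
Qed.

Lemma unrcK n : cancel (@unrc n) (@rc n).
Proof.
move=> t; apply: val_inj; rewrite /= -lastI.
by rewrite [in RHS](tuple_eta t).
Qed.

Lemma sum_tupleS n (f : n.+1.-tuple bool -> nat) :
  \sum_(t : n.+1.-tuple bool) f t = \sum_(t : n.-tuple bool) \sum_(b : bool) f (rc (t, b)).
Proof.
rewrite pair_bigA /= (reindex (@rc n)) //.
by exists (@unrc n) => x _; [apply: rcK | apply: unrcK].
Qed.

Definition Gc n r s k : nat := \sum_(P : n.-tuple bool) \sum_(Q : n.-tuple bool)
  ((count id P == r) && (count id Q == s) && (stat P Q == k)).

Lemma Gterm n r s k (a b : bool) :
  \sum_(t : n.-tuple bool) \sum_(t' : n.-tuple bool)
   ((count id (rc (t, a)) == r) && (count id (rc (t', b)) == s)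
     && (stat (rc (t, a)) (rc (t', b)) == k))
  = if (r < a) || (s < b) then 0 else if r == s then
      (if k == 0 then 0 else Gc n (r - a) (s - b) k.-1) else Gc n (r - a) (s - b) k.
Proof.
under eq_bigr => t _ do under eq_bigr => t' _ do
  rewrite /rc /= !count_rcons_id stat_rcons ?size_tuple // termP.
case: ifP => _; first by rewrite big1 // => t _; rewrite big1.
case: ifP => _; last by [].
case: eqP => [_|_]; first by rewrite big1 // => t _; rewrite big1.
by [].
Qed.

Lemma Gc_F n r s k : Gc n r s k = F n r s k.
Proof.
elim: n r s k => [|n IH] r s k.
  rewrite /Gc (big_pred1 [tuple]) => [|t]; last by apply/esym/eqP/val_inj; case: t => [[|? ?]].
  rewrite (big_pred1 [tuple]) => [|t]; last by apply/esym/eqP/val_inj; case: t => [[|? ?]].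
  by rewrite /stat /= [r == 0]eq_sym [s == 0]eq_sym [k == 0]eq_sym.
rewrite /Gc sum_tupleS.
under eq_bigr => t _ do under eq_bigr => b _ do rewrite sum_tupleS.
rewrite exchange_big /=.
under eq_bigr => a _ do (under eq_bigr => t _ do rewrite exchange_big /=; rewrite exchange_big /=).
rewrite !big_bool /= !Gterm /= !IH.
case: (eqVneq r s) => [<-|ne] /=.
  case: k => [|k] /=; first by case: r.
  by case: r => [|r] /=; rewrite ?subn1 ?subn0 /= ?addn0 ?add0n //; lia.
by case: r ne => [|r]; case: s => [|s] ne //=; rewrite ?subn1 ?subn0 /= ?addn0 ?add0n; lia.
Qed.

Lemma cnt_le (R : seq bool) i : (count id (take i R) <= i)%N.
Proof. by rewrite (leq_trans (count_size _ _)) // size_take; case: ltnP => // /ltnW. Qed.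

Lemma vtx_inj n (P Q : lpath n) i j : vtx P i = vtx Q j -> i = j.
Proof.
rewrite /vtx => -[e1 e2]; have := cnt_le P i; have := cnt_le Q j; lia.
Qed.

Lemma verts_uniq n (P : lpath n) : uniq (verts P).
Proof.
rewrite /verts map_inj_in_uniq ?iota_uniq // => i j _ _; exact: vtx_inj.
Qed.

Lemma vtx_in_verts n (P Q : lpath n) i : (i <= n)%N ->
  (vtx P i \in verts Q) = (count id (take i P) == count id (take i Q)).
Proof.
move=> hi; apply/idP/idP.
  case/mapP => j _ e; have ij := vtx_inj e; subst j.
  by move: e; rewrite /vtx => -[->].
move/eqP => e; apply/mapP; exists i; first by rewrite mem_iota; lia.
by rewrite /vtx e.
Qed.

Lemma shared_count n (P Q : lpath n) excl :
  shared P Q excl = count (fun i => (vtx P i \in verts Q) && (vtx P i \notin excl)) (iota 0 n.+1).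
Proof.
by rewrite /shared undup_id ?verts_uniq // size_filter /verts count_map.
Qed.

Lemma vtx0 n (P : lpath n) i : (vtx P i == (0, 0)%N) = (i == 0%N).
Proof.
rewrite /vtx; apply/eqP/eqP => [[e1 e2]|->]; last by rewrite take0.
have := cnt_le P i; lia.
Qed.

Lemma count_cons' T (a : pred T) x s : count a (x :: s) = (a x + count a s)%N.
Proof. by []. Qed.

Lemma shared1 n (P Q : lpath n) : shared P Q [:: (0, 0)%N] = stat P Q.
Proof.
rewrite shared_count /stat size_tuple (_ : iota 0 n.+1 = 0%N :: iota 1 n) // count_cons'.
rewrite mem_seq1 (vtx0 P 0) eqxx andbF add0n.
apply: eq_in_count => i; rewrite mem_iota => /andP [h1 h2].
have hi : (i <= n)%N by lia.
have h0 : (i == 0%N) = false by lia.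
by rewrite vtx_in_verts // mem_seq1 vtx0 h0 andbT.
Qed.

Lemma vtxn n (P : lpath n) r i : count id P = r -> (i <= n)%N ->
  (vtx P i == (r, n - r)) = (i == n).
Proof.
move=> hr hi; rewrite /vtx; apply/eqP/eqP => [[e1 e2]|->].
  have : (r <= n)%N by rewrite -hr -[X in (_ <= X)%N](size_tuple P) count_size.
  have := cnt_le P i; lia.
by rewrite take_oversize ?size_tuple // hr.
Qed.

Lemma shared2 n (P Q : lpath n) r : count id P = r -> count id Q = r -> (0 < n)%N ->
  shared P Q [:: (0, 0); (r, n - r)]%N = (stat P Q).-1.
Proof.
move=> hP hQ hn.
rewrite shared_count /stat size_tuple (_ : iota 0 n.+1 = 0%N :: iota 1 n) // count_cons'.
rewrite !inE (vtx0 P 0) eqxx /= andbF add0n.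
have e : iota 1 n = iota 1 n.-1 ++ [:: n].
  have e' : forall m, iota 1 m.+1 = iota 1 m ++ [:: m.+1].
    by move=> m; have := iotaD 1 m 1; rewrite addn1 add1n => ->.
  by rewrite -{1}(prednK hn) e' prednK.
rewrite e !count_cat /= addn0.
rewrite (@take_oversize _ n P) ?size_tuple // (@take_oversize _ n Q) ?size_tuple //.
rewrite hP hQ eqxx addn1 /=.
rewrite vtx_in_verts // !inE (vtx0 P n) (vtxn hP) // eqxx orbT andbF addn0.
apply: eq_in_count => i; rewrite mem_iota => /andP [h1 h2].
have hi : (i <= n)%N by lia.
have h0 : (i == 0%N) = false by lia.
have h3 : (i == n) = false by lia.
by rewrite vtx_in_verts // !inE vtx0 h0 (vtxn hP) // h3 andbT.
Qed.

Lemma card_pairs n (p : lpath n -> lpath n -> bool) :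
  #|[set PQ : lpath n * lpath n | p PQ.1 PQ.2]| = \sum_(P : lpath n) \sum_(Q : lpath n) p P Q.
Proof.
rewrite pair_bigA -sum1_card big_mkcond /=.
by apply: eq_bigr => PQ _; rewrite inE; case: (p _ _).
Qed.

Lemma stat_pos n (P Q : lpath n) : count id P = count id Q -> (0 < n)%N -> (0 < stat P Q)%N.
Proof.
move=> e hn; rewrite /stat size_tuple -has_count; apply/hasP; exists n.
  by rewrite mem_iota; lia.
by rewrite !take_oversize ?size_tuple // e.
Qed.

Lemma Mcount_lt n r s k : (r < s)%N -> Mcount n r s k = Gc n r s k.
Proof.
move=> h; rewrite /Mcount h.
rewrite (card_pairs (fun P Q => [&& ends_at P r, ends_at Q s & shared P Q [:: (0, 0)%N] == k])) /Gc.
apply: eq_bigr => P _; apply: eq_bigr => Q _.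
by rewrite /ends_at shared1 andbA.
Qed.

Lemma Mcount_eq n r k : (0 < n)%N -> (0 < k)%N -> Mcount n r r k = Gc n r r k.
Proof.
move=> hn hk; rewrite /Mcount ltnn /Ncount.
rewrite (card_pairs (fun P Q => [&& ends_at P r, ends_at Q r & shared P Q [:: (0, 0); (r, n - r)]%N == k.-1])) /Gc.
apply: eq_bigr => P _; apply: eq_bigr => Q _.
rewrite /ends_at.
case: (eqVneq (count id P) r) => [eP|] //=.
case: (eqVneq (count id Q) r) => [eQ|] //=.
rewrite (shared2 eP eQ hn).
have := @stat_pos n P Q; rewrite eP eQ => /(_ erefl hn).
by case: (stat P Q) => // m _; case: k hk.
Qed.

End Part2.
Import Part2.

Module Part3.
Local Open Scope ring_scope.

Lemma binz_nat (a b : nat) : binz a b = ('C(a, b))%:R.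
Proof. by rewrite /binz. Qed.

Lemma binz_negb (a b : int) : (b < 0)%R -> binz a b = 0.
Proof. by rewrite /binz => h; rewrite (lt_geF h) andbF. Qed.

Lemma binz_nega (a b : int) : (a < 0)%R -> binz a b = 0.
Proof. by rewrite /binz => h; rewrite (lt_geF h). Qed.

Lemma gb_binz (N a : int) : (0 <= N)%R -> gb N a = binz N a.
Proof.
rewrite /gb /binz => ->; rewrite /=.
by case: (ltP a 0) => h //; rewrite (lt_geF h).
Qed.

Lemma lgv_nat (m A B : nat) :
  ('C(m, A))%:R * (if B is B'.+1 then ('C(m, B'))%:R else 0)
  - (if A is A'.+1 then ('C(m, A'))%:R else 0) * ('C(m, B))%:R
  = (B%:R - A%:R) / (m.+1)%:R * ('C(m.+1, B))%:R * ('C(m.+1, A))%:R :> rat.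
Proof.
have h1 : forall X : nat, (m.+1)%:R * ('C(m, X))%:R = ((m.+1)%:R - X%:R) * ('C(m.+1, X))%:R :> rat.
  move=> X; case: (leqP X m.+1) => hX.
    by rewrite -natrB // -!natrM -(mul_bin_down m.+1 X).
  by rewrite !bin_small ?mulr0 //; lia.
have h2 : forall X : nat, (m.+1)%:R * (if X is X'.+1 then ('C(m, X'))%:R else 0)
    = X%:R * ('C(m.+1, X))%:R :> rat.
  move=> [|X]; first by rewrite mulr0 mul0r.
  by rewrite -!natrM -(mul_bin_diag m.+1 X).
have hm : (m.+1)%:R != 0 :> rat by rewrite pnatr_eq0.
apply: (mulfI hm); apply: (mulfI hm).
set M := (m.+1)%:R : rat.
set p := ('C(m, A))%:R : rat.
set q := (if B is B'.+1 then ('C(m, B'))%:R else 0) : rat.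
set u := (if A is A'.+1 then ('C(m, A'))%:R else 0) : rat.
set w := ('C(m, B))%:R : rat.
have -> : M * (M * (p * q - u * w)) = (M * p) * (M * q) - (M * u) * (M * w) by ring.
rewrite /p /q /u /w /M h1 h2 h1 h2.
field; by rewrite addrC natr1.
Qed.

Lemma binz_m1 (m A : nat) : binz m (Posz A - 1) = (if A is A'.+1 then ('C(m, A'))%:R else 0).
Proof. by case: A => [|A]; [rewrite binz_negb | rewrite subzS binz_nat]. Qed.

Lemma ub_binz (M a b : int) : (0 < M)%R ->
  ub M a b = (b - a)%:~R / M%:~R * binz M b * binz M a.
Proof.
case: M => [[|m]|m] // _.
rewrite /ub subzS !gb_binz //.
case: a => [A|A]; last first.
  by rewrite !(@binz_negb _ (Negz A)) // (@binz_negb _ (Negz A - 1)) //; ring.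
case: b => [B|B]; last first.
  by rewrite !(@binz_negb _ (Negz B)) // (@binz_negb _ (Negz B - 1)) //; ring.
rewrite !binz_nat !binz_m1 lgv_nat.
by rewrite intrB !pmulrn.
Qed.

Lemma act_Zpow a v n r s : act (Zv ^+ a) v n r s = v (n - a%:Z) r s.
Proof.
elim: a n => [|a IH] n; first by rewrite expr0 act1 subr0.
rewrite exprS actM actZv IH; congr v; rewrite -addn1 PoszD; ring.
Qed.

Lemma act_Xpow a v n r s : act (Xv ^+ a) v n r s = v n (r - a%:Z) s.
Proof.
elim: a r => [|a IH] r; first by rewrite expr0 act1 subr0.
rewrite exprS actM actXv IH; congr v; rewrite -addn1 PoszD; ring.
Qed.

Lemma act_Ypow a v n r s : act (Yv ^+ a) v n r s = v n r (s - a%:Z).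
Proof.
elim: a s => [|a IH] s; first by rewrite expr0 act1 subr0.
rewrite exprS actM actYv IH; congr v; rewrite -addn1 PoszD; ring.
Qed.

Lemma act_sign i p v n r s : act ((-1) ^+ i * p) v n r s = (-1) ^+ i * act p v n r s.
Proof.
elim: i => [|i IH]; first by rewrite !expr0 !mul1r.
rewrite !exprS -mulrA !mulN1r -scaleN1r actZ IH; ring.
Qed.

Lemma act_natmul p m v n r s : act (p *+ m) v n r s = act p v n r s *+ m.
Proof.
elim: m => [|m IH]; first by rewrite !mulr0n act0.
by rewrite !mulrS actD IH.
Qed.

Definition Uv : MP := 1 - Zv * Yv.
Definition Vv : MP := Zv * Xv.

Lemma act_U m v n r s : act (Uv ^+ m) v n r s =
  \sum_(j < m.+1) (-1) ^+ j * ('C(m, j))%:R * v (n - j%:Z) r (s - j%:Z).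
Proof.
rewrite /Uv exprDn act_sum; apply: eq_bigr => j _.
rewrite expr1n mul1r act_natmul (exprNn (Zv * Yv)) act_sign exprMn actM act_Zpow act_Ypow.
by rewrite mulr_natr mulrnAl.
Qed.

Lemma act_V i v n r s : act (Vv ^+ i) v n r s = v (n - i%:Z) (r - i%:Z) s.
Proof. by rewrite /Vv exprMn actM act_Zpow act_Xpow. Qed.

Definition gA (k : nat) (n r s : int) (i : nat) : rat :=
  ('C(k, i))%:R * \sum_(j < (k - i)%N.+1)
     (-1) ^+ j * ('C((k - i)%N, j))%:R * ub (n - j%:Z - i%:Z) (r - i%:Z) (s - j%:Z).

Lemma act_AB k n r s : act (Ap ^+ k - Bp ^+ k) ub n r s =
  \sum_(i < k.+1) (1 - (-1) ^+ i) * gA k n r s i.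
Proof.
have -> : Ap = Uv + Vv by rewrite /Ap /Uv /Vv; ring.
have -> : Bp = Uv + - Vv by rewrite /Bp /Uv /Vv; ring.
rewrite !exprDn -sumrB act_sum; apply: eq_bigr => i _.
rewrite (exprNn Vv) mulrCA -mulrnBl.
rewrite act_natmul actB act_sign actM act_U /gA.
under eq_bigr => j _ do rewrite act_V.
set S := \sum_(_ < _) _.
rewrite (_ : S = \sum_(j < (k - i)%N.+1) (-1) ^+ j * ('C((k - i)%N, j))%:R
   * ub (n - j%:Z - i%:Z) (r - i%:Z) (s - j%:Z)); last first.
  by apply: eq_bigr => j _; congr (_ * ub _ _ _); ring.
by rewrite -mulr_natr; ring.
Qed.

Lemma act_C k n r s : act (Cp ^+ k) ub n r s =
  \sum_(j < k.+1) ('C(k, j))%:R * ub (n - k%:Z) (r - j%:Z) (s - j%:Z).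
Proof.
rewrite /Cp exprMn actM act_Zpow exprDn act_sum; apply: eq_bigr => j _.
rewrite expr1n mul1r act_natmul exprMn actM act_Xpow act_Ypow.
by rewrite mulr_natl.
Qed.

Lemma sum_shrink (N M : nat) (f : nat -> rat) : (M <= N)%N ->
  (forall j, (M <= j)%N -> f j = 0) -> \sum_(j < N) f j = \sum_(j < M) f j.
Proof.
move=> hMN h; rewrite -!(big_mkord xpredT f) (big_cat_nat _ (n := M)) //=.
rewrite [X in _ + X]big1_seq ?addr0 // => j /andP [_].
by rewrite mem_index_iota => /andP [hj _]; exact: h.
Qed.

Lemma sum_pairs N (g : nat -> rat) :
  \sum_(i < (2 * N)%N) g i = \sum_(t < N) (g (2 * t)%N + g (2 * t).+1).
Proof.
elim: N => [|N IH]; first by rewrite !big_ord0.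
rewrite (_ : (2 * N.+1 = (2 * N).+2)%N); last lia.
by rewrite !big_ord_recr /= IH addrA.
Qed.

Definition stmtf (n r s k t j : nat) : rat :=
  (-1) ^+ j
  * ((s%:Z - j%:Z - r%:Z + 1 + 2 * t%:Z)%:~R
     / (n%:Z - 1 - j%:Z - 2 * t%:Z)%:~R)
  * binz k%:Z (2 * t%:Z + 1)
  * binz (k%:Z - 1 - 2 * t%:Z) j%:Z
  * binz (n%:Z - 1 - j%:Z - 2 * t%:Z) (s%:Z - j%:Z)
  * binz (n%:Z - 1 - j%:Z - 2 * t%:Z) (r%:Z - 1 - 2 * t%:Z).

Lemma inner_eq (n r s k t : nat) : (k <= n - 1)%N ->
  \sum_(j < n.+1) stmtf n r s k t j = gA k n r s (2 * t).+1.
Proof.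
move=> hk.
have e2 : (2 * t%:Z + 1) = Posz (2 * t).+1 by lia.
case: (leqP (2 * t).+1 k) => hi.
  rewrite /gA (@sum_shrink _ (k - (2 * t).+1).+1); last first.
  - move=> j hj; rewrite /stmtf.
    have e1 : (k%:Z - 1 - 2 * t%:Z) = Posz (k - (2 * t).+1) by lia.
    by rewrite e1 binz_nat bin_small ?mulr0 ?mul0r //; lia.
  - lia.
  rewrite mulr_sumr; apply: eq_bigr => j _; rewrite /stmtf.
  have hj : (j <= k - (2 * t).+1)%N by case: j => j /= hj'; lia.
  have e1 : (k%:Z - 1 - 2 * t%:Z) = Posz (k - (2 * t).+1) by lia.
  have e3 : (n%:Z - j%:Z - (2 * t).+1%:Z) = n%:Z - 1 - j%:Z - 2 * t%:Z by lia.
  have e4 : (r%:Z - (2 * t).+1%:Z) = r%:Z - 1 - 2 * t%:Z by lia.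
  have e5 : (s%:Z - j%:Z - (r%:Z - 1 - 2 * t%:Z)) = s%:Z - j%:Z - r%:Z + 1 + 2 * t%:Z by lia.
  rewrite e1 e2 !binz_nat e3 e4 ub_binz; last lia.
  rewrite e5; ring.
rewrite /gA bin_small // mul0r big1 // => j _.
by rewrite /stmtf e2 binz_nat bin_small // !mulr0 !mul0r.
Qed.

Lemma first_eq n r s k : (k <= n - 1)%N ->
  2 * \sum_(t < n.+1) \sum_(j < n.+1) stmtf n r s k t j
  = \sum_(i < k.+1) (1 - (-1) ^+ i) * gA k n r s i.
Proof.
move=> hk.
under eq_bigr => t _ do rewrite inner_eq //.
rewrite -(@sum_shrink (2 * n.+1) k.+1 (fun i => (1 - (-1) ^+ i) * gA k n r s i)); last first.
- by move=> i hi; rewrite /gA bin_small // mul0r mulr0.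
- lia.
rewrite (sum_pairs _ (fun i => (1 - (-1) ^+ i) * gA k n r s i)) mulr_sumr; apply: eq_bigr => t _.
rewrite -signr_odd oddM /= expr0 subrr mul0r add0r.
by rewrite -signr_odd /= oddM /= expr1 opprK.
Qed.

Lemma second_eq (n r s k : nat) : (1 <= n)%N -> (k <= n - 1)%N ->
  ((s%:Z - r%:Z)%:~R / (n%:Z - k%:Z)%:~R)
      * (\sum_(j < n.+1)
           binz k%:Z j%:Z * binz (n%:Z - k%:Z) (r%:Z - j%:Z)
           * binz (n%:Z - k%:Z) (s%:Z - j%:Z))
  = \sum_(j < k.+1) ('C(k, j))%:R * ub (n%:Z - k%:Z) (r%:Z - j%:Z) (s%:Z - j%:Z).
Proof.
move=> hn hk.
rewrite (@sum_shrink _ k.+1 (fun j => binz k%:Z j%:Z * binz (n%:Z - k%:Z) (r%:Z - j%:Z)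
           * binz (n%:Z - k%:Z) (s%:Z - j%:Z))); last 2 first.
- lia.
- by move=> j hj; rewrite binz_nat bin_small // !mul0r.
rewrite mulr_sumr; apply: eq_bigr => j _.
rewrite binz_nat ub_binz; last lia.
have -> : (s%:Z - j%:Z - (r%:Z - j%:Z)) = s%:Z - r%:Z by ring.
ring.
Qed.

Lemma Mcount_act (n r s k : nat) : (1 <= n)%N -> (r <= s)%N -> (k <= n - 1)%N ->
  (r = s -> 1 <= k)%N -> ((Mcount n r s k)%:R : rat) = act (Tp ^+ k) ub n r s.
Proof.
move=> hn hrs hk hd.
have hk' : (k <= n.-1)%N by rewrite -subn1.
rewrite -Fh //.
case: (ltngtP r s) hrs => // [hlt | heq] _.
  by rewrite Mcount_lt // Gc_F.
subst s; rewrite Mcount_eq ?Gc_F //; exact: hd.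
Qed.


End Part3.
Import Part3.

Local Open Scope ring_scope.

Theorem theorem2 (n r s k : nat) :
  (1 <= n)%N -> (r <= s)%N -> (s <= n)%N -> (k <= n - 1)%N ->
  (r = s -> 1 <= k)%N ->
  ((Mcount n r s k)%:R : rat) =
    2 * (\sum_(t < n.+1) \sum_(j < n.+1)
          (-1) ^+ j
          * ((s%:Z - j%:Z - r%:Z + 1 + 2 * t%:Z)%:~R
             / (n%:Z - 1 - j%:Z - 2 * t%:Z)%:~R)
          * binz k%:Z (2 * t%:Z + 1)
          * binz (k%:Z - 1 - 2 * t%:Z) j%:Z
          * binz (n%:Z - 1 - j%:Z - 2 * t%:Z) (s%:Z - j%:Z)
          * binz (n%:Z - 1 - j%:Z - 2 * t%:Z) (r%:Z - 1 - 2 * t%:Z))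
    + ((s%:Z - r%:Z)%:~R / (n%:Z - k%:Z)%:~R)
      * (\sum_(j < n.+1)
           binz k%:Z j%:Z * binz (n%:Z - k%:Z) (r%:Z - j%:Z)
           * binz (n%:Z - k%:Z) (s%:Z - j%:Z))
  /\ ((r < s)%N ->
      ((Mcount n r s 0)%:R : rat) =
        (s%:Z - r%:Z)%:~R / n%:R * ('C(n, r))%:R * ('C(n, s))%:R).
Proof.
move=> hn hrs hsn hk hd; split.
  rewrite Mcount_act // -key actD act_AB act_C.
  rewrite second_eq //.
  have := first_eq r s hk; rewrite /stmtf => ->.
  by [].
move=> hlt.
rewrite Mcount_act //; last lia.
rewrite expr0 act1 ub_binz; last lia.
rewrite !binz_nat pmulrn; ring.
Qed.
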